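(* Let $m\ge 0$ and $Z\ge 1$ be integers and let $\gamma,\kappa\ge 2$ be integers with $\gamma\kappa>\gamma+\kappa$. Consider pairs $(\mathbf P,\mathbf L)$ with $\mathbf P\in\{0,\ldots,m\}^{\gamma\times\kappa}$ and $\mathbf L\in\mathbb{Z}_Z^{\gamma\times\kappa}$. For $1\le i_1<i_2\le\gamma$ and $1\le j_1<j_2\le\kappa$, call the 4-cycle candidate $(i_1,i_2,j_1,j_2)$ active under $(\mathbf P,\mathbf L)$ if both $$\mathbf P(i_1,j_1)+\mathbf P(i_2,j_2)=\mathbf P(i_1,j_2)+\mathbf P(i_2,j_1)$$ and $$\mathbf L(i_1,j_1)+\mathbf L(i_2,j_2)\equiv\mathbf L(i_1,j_2)+\mathbf L(i_2,j_1)\pmod Z.$$ Let $N$ be the number of pairs $(\mathbf P,\mathbf L)$ under which no 4-cycle candidate is active. Let $\Delta=(2\gamma-3)(2\kappa-3)$, $I=\frac{(\Delta-1)^{\Delta-1}}{\Delta^{\Delta}}$ and $II=\frac{27}{256(\gamma\kappa-\gamma-\kappa)}$. If $$\frac{2m^2+4m+3}{3(m+1)^3Z}\le\max\{I,II\},$$ then $$N\ \ge\ [Z(m+1)]^{\gamma\kappa}\times\begin{cases}\left(1-\frac{2}{\Delta}\right)^{\binom{\gamma}{2}\binom{\kappa}{2}}, & \text{if } I>II,\\[2pt] \left(1-\frac{\gamma\kappa-\gamma-\kappa+1}{4(\gamma\kappa-\gamma-\kappa)}\right)^{\gamma\kappa}, & \text{otherwise.}\end{cases}$$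
   Context: This is the setting of uniform edge spreading (each entry of the partition matrix $\mathbf P$ uniform on $\{0,\ldots,m\}$, $m$ the coupling memory) and uniform lifting (each lifting shift uniform on $\mathbb{Z}_Z$) for a QC-SC-LDPC code from the all-ones $\gamma\times\kappa$ base matrix; the displayed activation conditions are the conditions for a base-graph 4-cycle to survive edge spreading and $Z$-lifting. *)

(* Defs.v *)
From HB Require Import structures.
From mathcomp Require Import all_boot all_order all_algebra.
Set Implicit Arguments. Unset Strict Implicit. Unset Printing Implicit Defensive.
Import Order.TTheory GRing.Theory Num.Theory.

Definition pmat (gamma kappa m : nat) := {ffun 'I_gamma * 'I_kappa -> 'I_m.+1}.
Definition lmat (gamma kappa Z : nat) := {ffun 'I_gamma * 'I_kappa -> 'I_Z}.

Definition active (gamma kappa m Z : nat) (P : pmat gamma kappa m) (L : lmat gamma kappa Z)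
  (i1 i2 : 'I_gamma) (j1 j2 : 'I_kappa) : bool :=
  ((P (i1, j1) + P (i2, j2) == P (i1, j2) + P (i2, j1))%N) &&
  ((L (i1, j1) + L (i2, j2) == L (i1, j2) + L (i2, j1) %[mod Z])%N).

Definition no_active (gamma kappa m Z : nat) (PL : pmat gamma kappa m * lmat gamma kappa Z) : bool :=
  [forall i1 : 'I_gamma, forall i2 : 'I_gamma, forall j1 : 'I_kappa, forall j2 : 'I_kappa,
     ((i1 < i2)%N && (j1 < j2)%N) ==> ~~ active PL.1 PL.2 i1 i2 j1 j2].

Definition Ncount (gamma kappa m Z : nat) : nat :=
  #|[set PL : pmat gamma kappa m * lmat gamma kappa Z | no_active PL]|.

Local Open Scope ring_scope.

Definition Delta (gamma kappa : nat) : nat := ((2 * gamma - 3) * (2 * kappa - 3))%N.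

Definition boundI (gamma kappa : nat) : rat :=
  let D := Delta gamma kappa in
  ((D%:R - 1) ^+ (D.-1)) / (D%:R ^+ D).

Definition boundII (gamma kappa : nat) : rat :=
  27%:R / (256%:R * (gamma * kappa - gamma - kappa)%N%:R).

(* Main.v *)
Require Import Defs.
From HB Require Import structures.
From mathcomp Require Import all_boot all_order all_algebra.
From mathcomp Require Import zify ring lra.

Set Implicit Arguments. Unset Strict Implicit. Unset Printing Implicit Defensive.
Section Greedy.
Variables (I V : finType) (v0 : V) (r : I -> nat) (r_inj : injective r).
Variables (ok : I -> {ffun I -> V} -> bool) (c : I -> nat).
Hypothesis ok_loc : forall i (f g : {ffun I -> V}), (forall j, r j <= r i -> f j = g j) -> ok i f = ok i g.
Definition upd (f : {ffun I -> V}) i v : {ffun I -> V} := [ffun j => if j == i then v else f j].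
Hypothesis ok_cnt : forall i f, c i <= #|[set v | ok i (upd f i v)]|.

Definition G k := [set f : {ffun I -> V} | [forall i, (r i < k) ==> ok i f] && [forall j, (k <= r j) ==> (f j == v0)]].

Lemma G_step k : (\prod_(i | r i == k) c i) * #|G k| <= #|G k.+1|.
Proof.
case: (pickP (fun i => r i == k)) => [i /eqP ri|none].
- rewrite (big_pred1 i); last first.
    by move=> j /=; apply/eqP/eqP => [rj|->//]; apply: r_inj; rewrite rj ri.
  set A := [set p : {ffun I -> V} * V | (p.1 \in G k) && ok i (upd p.1 i p.2)].
  have cardA : #|A| = \sum_(f in G k) #|[set v | ok i (upd f i v)]|.
    rewrite -sum1_card (eq_bigl (fun p => (p.1 \in G k) && ok i (upd p.1 i p.2))); last first.
      by move=> p; rewrite inE.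
    rewrite -(pair_big_dep (fun f => f \in G k) (fun f v => ok i (upd f i v)) (fun _ _ => 1)) /=.
    by apply: eq_bigr => f _; rewrite -sum1_card; apply: eq_bigl => v; rewrite inE.
  have h1 : c i * #|G k| <= #|A|.
    rewrite cardA mulnC -sum_nat_const; apply: leq_sum => f _; exact: ok_cnt.
  apply: (leq_trans h1).
  have inj : {in A &, injective (fun p => upd p.1 i p.2)}.
    move=> [f v] [g w]; rewrite !inE /= => /andP[/andP[_ /forallP Hf] _].
    move=> /andP[/andP[_ /forallP Hg] _] E.
    have Ev : v = w by have := congr1 (fun h : {ffun I -> V} => h i) E; rewrite !ffunE eqxx.
    subst w; congr pair; apply/ffunP => j.
    case: (eqVneq j i) => [->|nji].
      by have := Hf i; have := Hg i; rewrite ri leqnn /= => /eqP -> /eqP ->.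
    by have := congr1 (fun h : {ffun I -> V} => h j) E; rewrite !ffunE (negPf nji).
  rewrite -(card_in_imset inj); apply: subset_leq_card; apply/subsetP => h /imsetP[[f v]].
  rewrite inE /= inE => /andP[/andP[/forallP Hf /forallP Hf2] Hok] ->.
  rewrite inE; apply/andP; split; apply/forallP => j; apply/implyP => Hj.
  + case: (eqVneq j i) => [->//|nji].
    have lt : r j < k.
      have : r j != k by apply: contra nji => /eqP rj; apply/eqP/r_inj; rewrite rj ri.
      lia.
    rewrite (@ok_loc j _ f); first by have := Hf j; rewrite lt.
    by move=> l Hl; rewrite ffunE; case: (eqVneq l i) => // eli; subst l; lia.
  + rewrite ffunE; case: (eqVneq j i) => [eji|_]; first by subst j; lia.
    by have := Hf2 j; rewrite (ltnW Hj).
- rewrite big_pred0 // mul1n; apply: subset_leq_card; apply/subsetP => f.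
  rewrite !inE => /andP[/forallP Hf /forallP Hf2]; apply/andP; split; apply/forallP => j; apply/implyP => Hj.
  + have := none j; have := Hf j; move=> H1 H2; apply: (implyP H1).
    by move/negbT: H2; lia.
  + by have := Hf2 j; rewrite ltnW.
Qed.

Lemma G_count k : \prod_(i | r i < k) c i <= #|G k|.
Proof.
elim: k => [|k IH].
- rewrite big_pred0; last by move=> i; rewrite ltn0.
  rewrite -(cards1 ([ffun=> v0] : {ffun I -> V})); apply: subset_leq_card; rewrite sub1set.
  rewrite inE; apply/andP; split; apply/forallP => j; rewrite ?ffunE ?ltn0 ?eqxx ?implybT //.
- rewrite (bigID (fun i => r i == k)) /=.
  rewrite (eq_bigl (fun i => r i == k)); last by move=> i; case: (eqVneq (r i) k) => [->|]; rewrite ?andbT ?andbF ?ltnSn.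
  rewrite [X in _ * X](eq_bigl (fun i => r i < k)); last by move=> i; case: (eqVneq (r i) k) => [->|H] /=; rewrite ?ltnn ?andbF ?andbT // ltnS leq_eqVlt (negPf H).
  apply: leq_trans (G_step k); exact: leq_mul.
Qed.

Lemma greedy nb : (forall i, r i < nb) ->
  \prod_i c i <= #|[set f : {ffun I -> V} | [forall i, ok i f]]|.
Proof.
move=> hb; have := G_count nb.
rewrite (eq_bigl predT) // => /leq_trans; apply; apply: subset_leq_card; apply/subsetP => f.
by rewrite !inE => /andP[/forallP H _]; apply/forallP => i; have := H i; rewrite hb.
Qed.
End Greedy.


Section App.
Variables (gamma kappa m Z : nat).
Hypothesis Zpos : 0 < Z.
Local Notation I := ('I_gamma * 'I_kappa)%type.
Local Notation V := ('I_m.+1 * 'I_Z)%type.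
Local Notation F := {ffun I -> V}.

Definition PofF (f : F) : pmat gamma kappa m := [ffun c => (f c).1].
Definition LofF (f : F) : lmat gamma kappa Z := [ffun c => (f c).2].

Definition okc (c : I) (f : F) : bool :=
  [forall p : I, ((p.1 < c.1) && (p.2 < c.2)) ==> ~~ active (PofF f) (LofF f) p.1 c.1 p.2 c.2].

Definition rk (c : I) : nat := c.1 * kappa + c.2.

Lemma rk_inj : injective rk.
Proof.
move=> [i j] [i' j']; rewrite /rk /= => E.
have hj := ltn_ord j; have hj' := ltn_ord j'.
have e1 : (i : nat) = i' by nia.
have e2 : (j : nat) = j' by nia.
by congr pair; apply: val_inj.
Qed.

Lemma rk_lt c : rk c < gamma * kappa.
Proof. case: c => i j; rewrite /rk /=; have := ltn_ord i; have := ltn_ord j; nia. Qed.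

Lemma okc_loc c (f g : F) : (forall d, rk d <= rk c -> f d = g d) -> okc c f = okc c g.
Proof.
case: c => i j E; rewrite /okc /=; apply: eq_forallb => -[i1 j1] /=.
case H: ((i1 < i) && (j1 < j)) => //=; move/andP: H => [h1 h2].
have hj := ltn_ord j; have hj1 := ltn_ord j1.
rewrite /active !ffunE !E // /rk /=; nia.
Qed.

Definition v0 : V := (ord0, Ordinal Zpos).

Lemma okc_cnt (c : I) (f : F) : (m.+1 * Z) - c.1 * c.2 <= #|[set v | okc c (upd f c v)]|.
Proof.
case: c => i j /=.
set A := [set v | okc (i, j) (upd f (i, j) v)].
have hc := cardsC A; rewrite card_prod !card_ord in hc.
suff H : #|~: A| <= i * j by rewrite -hc leq_subLR addnC leq_add2r.
pose S (p : I) := [set v : V | active (PofF (upd f (i,j) v)) (LofF (upd f (i,j) v)) p.1 i p.2 j].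
pose g (p : I) := odflt v0 [pick v in S p].
pose Q := setX [set x : 'I_gamma | x < i] [set y : 'I_kappa | y < j].
have cardQ : #|Q| <= i * j.
  rewrite cardsX; apply: leq_mul.
  + rewrite -sum1_card (eq_bigl (fun x : 'I_gamma => x < i)); last by move=> x; rewrite inE.
    rewrite -(big_mkord (fun x => x < i) (fun _ => 1)).
    have := @big_nat_widen _ 0 addn 0 i gamma xpredT (fun _ => 1) (ltnW (ltn_ord i)); rewrite /= => <-.
    by rewrite sum_nat_const_nat subn0 muln1.
  + rewrite -sum1_card (eq_bigl (fun x : 'I_kappa => x < j)); last by move=> x; rewrite inE.
    rewrite -(big_mkord (fun x => x < j) (fun _ => 1)).
    have := @big_nat_widen _ 0 addn 0 j kappa xpredT (fun _ => 1) (ltnW (ltn_ord j)); rewrite /= => <-.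
    by rewrite sum_nat_const_nat subn0 muln1.
have neq1 (x : 'I_gamma) (y : 'I_kappa) : x < i -> ((x, y) == (i, j)) = false.
  by move=> h; apply/negbTE; rewrite xpair_eqE negb_and; apply/orP; left; rewrite neq_ltn h.
have neq2 (y : 'I_kappa) : y < j -> ((i, y) == (i, j)) = false.
  by move=> h; apply/negbTE; rewrite xpair_eqE negb_and; apply/orP; right; rewrite neq_ltn h.
have Suniq (p : I) (v w : V) : p.1 < i -> p.2 < j -> v \in S p -> w \in S p -> v = w.
  case: p => i1 j1 /= h1 h2; rewrite !inE /active /= !ffunE /= (neq1 _ _ h1) (neq1 _ _ h1) (neq2 _ h2) eqxx.
  case: v => v1 v2; case: w => w1 w2 /= /andP[/eqP e1 e2] /andP[/eqP e3 e4].
  have e5 : (v1 : nat) = w1 by lia.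
  have e6 : (v2 : nat) = w2.
    have := e2; rewrite -(eqP e4) eqn_modDl => /eqP.
    by rewrite !modn_small.
  by congr pair; apply: val_inj.
apply: leq_trans cardQ; apply: leq_trans (leq_imset_card g Q); apply: subset_leq_card.
apply/subsetP => v; rewrite !inE /okc negb_forall => /existsP[p].
rewrite negb_imply negbK => /andP[/andP[h1 h2] hact].
apply/imsetP; exists p; first by rewrite inE !inE h1 h2.
have vS : v \in S p by rewrite inE.
rewrite /g; case: pickP => [w wS|none]; last by have := none v; rewrite vS.
exact: Suniq wS.
Qed.
Lemma count_main : \prod_(c : I) (m.+1 * Z - c.1 * c.2) <= Ncount gamma kappa m Z.
Proof.
have := @greedy I V v0 rk rk_inj okc (fun c : I => m.+1 * Z - c.1 * c.2) okc_loc okc_cnt _ rk_lt.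
move/leq_trans; apply.
rewrite /Ncount.
pose h (f : F) := (PofF f, LofF f).
have hinj : injective h.
  move=> f g [E1 E2]; apply/ffunP => c.
  have := congr1 (fun P : pmat gamma kappa m => P c) E1; have := congr1 (fun L : lmat gamma kappa Z => L c) E2.
  rewrite /PofF /LofF !ffunE; case: (f c) => ??; case: (g c) => ?? /= -> -> //.
rewrite -(card_imset _ hinj); apply: subset_leq_card; apply/subsetP => x /imsetP[f].
rewrite inE => fin ->; move: fin; rewrite inE => /forallP Hf; rewrite /no_active /=.
apply/forallP => i1; apply/forallP => i2; apply/forallP => j1; apply/forallP => j2.
apply/implyP => /andP[h1 h2].
by have := Hf (i2, j2); rewrite /okc => /forallP H; have := H (i1, j1); rewrite /= h1 h2.
Qed.
End App.

Lemma D3_lem (g k : nat) : ( 2 <= g -> 2 <= k -> g + k < g * k -> 3 <= (2 * g - 3) * (2 * k - 3))%N.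
Proof.
move=> hg hk hgk.
have [a ea] : exists a, g = a.+2 by exists (g - 2); lia.
have [b eb] : exists b, k = b.+2 by exists (k - 2); lia.
subst g k.
have -> : 2 * a.+2 - 3 = (2 * a).+1 by lia.
have -> : 2 * b.+2 - 3 = (2 * b).+1 by lia.
have h : 0 < a + b by clear hg; case: a hgk => [|a]; rewrite ?mul0n ?muln0 /=; lia.
move: h; clear; move=> h; rewrite !mulSn !mulnS ?mulnA; nia.
Qed.
Lemma DK_lem (g k : nat) : ( 2 <= g -> 2 <= k -> g + k < g * k -> 3 * ((g - 1) * (k - 1)) <= 2 * ((2 * g - 3) * (2 * k - 3)))%N.
Proof.
move=> hg hk hgk.
have [a ea] : exists a, g = a.+2 by exists (g - 2); lia.
have [b eb] : exists b, k = b.+2 by exists (k - 2); lia.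
subst g k.
have -> : 2 * a.+2 - 3 = (2 * a).+1 by lia.
have -> : 2 * b.+2 - 3 = (2 * b).+1 by lia.
have -> : a.+2 - 1 = a.+1 by lia.
have -> : b.+2 - 1 = b.+1 by lia.
have h : 0 < a + b by clear hg; case: a hgk => [|a]; rewrite ?mul0n ?muln0 /=; lia.
move: h; clear; move=> h; rewrite !mulSn !mulnS ?mulnA; nia.
Qed.

Unset Implicit Arguments.
Import Order.TTheory GRing.Theory Num.Theory.
Local Open Scope ring_scope.

Lemma bern_nat (k n : nat) : (k ^ n.+1 + n * k ^ n <= k * (k.+1) ^ n)%N.
Proof.
elim: n => [|n IH]; first by rewrite !expn0 expn1; lia.
rewrite !expnS in IH *.
move: IH; set X := (k ^ n)%N; set Y := (k.+1 ^ n)%N => IH; nia.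
Qed.

Lemma bern2 (k : nat) : (0 < k)%N -> (2 * k ^ k <= k.+1 ^ k)%N.
Proof.
move=> k0; have := bern_nat k k; rewrite expnS => H.
have : (k * (2 * k ^ k) <= k * k.+1 ^ k)%N by nia.
by rewrite leq_pmul2l.
Qed.

Lemma cross (a b c d : nat) : (0 < b)%N -> (0 < d)%N ->
  (a%:R / b%:R <= c%:R / d%:R :> rat) -> (a * d <= c * b)%N.
Proof.
move=> b0 d0; rewrite ler_pdivrMr ?ltr0n // mulrAC ler_pdivlMr ?ltr0n //.
by rewrite -!natrM ler_nat.
Qed.

Lemma bern_rat (a : rat) (b : nat) : 0 <= a <= 1 ->
  (1 - a) ^+ b * (1 + b%:R * a) <= 1.
Proof.
move=> /andP[a0 a1]; elim: b => [|b IH]; first by rewrite expr0 mul0r addr0 mulr1.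
have x0 : 0 <= (1 - a) ^+ b by apply: exprn_ge0; lra.
have : (1 - a) * (1 + b.+1%:R * a) <= 1 + b%:R * a.
  have b0 : 0 <= b%:R :> rat by rewrite ler0n.
  rewrite -natr1; nra.
move=> H; apply: le_trans IH.
by rewrite exprS [(1 - a) * _]mulrC -mulrA; apply: ler_wpM2l.
Qed.

Lemma cellI (M D b : nat) : (2 < D)%N -> (D + 2 * b <= 2 * M)%N -> (b <= M)%N ->
  0 <= (M%:R : rat) * (1 - 2%:R / D%:R) ^+ b <= (M - b)%N%:R.
Proof.
move=> D2 hb bM.
have D0 : 0 < D%:R :> rat by rewrite ltr0n; lia.
set a := 2%:R / D%:R.
have aD : a * D%:R = 2%:R by rewrite /a divfK // gt_eqF.
have a0 : 0 <= a by rewrite /a divr_ge0 ?ler0n.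
have a1 : a <= 1 by rewrite /a ler_pdivrMr // mul1r ler_nat; lia.
have x0 : 0 <= (1 - a) ^+ b by apply: exprn_ge0; lra.
have hx := @bern_rat a b (introT andP (conj a0 a1)).
set x := (1 - a) ^+ b in x0 hx *.
have M0 : 0 <= M%:R :> rat by rewrite ler0n.
have b0 : 0 <= b%:R :> rat by rewrite ler0n.
have hn : (D%:R + 2%:R * b%:R <= 2%:R * M%:R :> rat) by rewrite -!natrM -natrD ler_nat.
have h : 0 <= M%:R * a - 1 - b%:R * a.
  have : 0 <= (M%:R * a - 1 - b%:R * a) * D%:R.
    have -> : (M%:R * a - 1 - b%:R * a) * D%:R = M%:R * (a * D%:R) - D%:R - b%:R * (a * D%:R) by ring.
    rewrite aD; lra.
  by rewrite pmulr_lge0.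
apply/andP; split; first exact: mulr_ge0.
rewrite natrB //.
have p0 : 0 < 1 + b%:R * a by nra.
rewrite -(ler_pM2r p0).
apply: le_trans (_ : M%:R <= _).
  by rewrite -mulrA ler_piMr.
have : 0 <= b%:R * (M%:R * a - 1 - b%:R * a) by exact: mulr_ge0.
nra.
Qed.

Lemma cellII (M K b : nat) : (0 < K)%N -> (4 * K <= M)%N -> (b <= K + 1)%N ->
  0 <= (M%:R : rat) * (1 - (K + 1)%N%:R / (4 * K)%N%:R) <= (M - b)%N%:R.
Proof.
move=> K0 KM bK.
have K4 : 0 < (4 * K)%N%:R :> rat by rewrite ltr0n; lia.
set q := (K + 1)%N%:R / (4 * K)%N%:R.
have qK : q * (4 * K)%N%:R = (K + 1)%N%:R by rewrite /q divfK // gt_eqF.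
have q0 : 0 <= q by rewrite /q divr_ge0 ?ler0n.
move: qK; rewrite natrM natrD => qK.
have hK : 1 <= K%:R :> rat by rewrite ler1n.
have hM : 4%:R * K%:R <= M%:R :> rat by rewrite -natrM ler_nat.
have hb : b%:R <= K%:R + 1 :> rat by rewrite natr1 ler_nat; lia.
have b0 : 0 <= b%:R :> rat by rewrite ler0n.
rewrite natrB; last lia.
apply/andP; split; nra.
Qed.

Lemma sum_cells (gamma kappa : nat) :
  (\sum_(c : ('I_gamma * 'I_kappa)%type) (c.1 * c.2) = 'C(gamma, 2) * 'C(kappa, 2))%N.
Proof.
rewrite -(pair_bigA _ (fun (i : 'I_gamma) (j : 'I_kappa) => (i * j)%N)) /=.
under eq_bigr => i _ do rewrite -big_distrr.
rewrite -big_distrl /= -(bin2_sum gamma) -(bin2_sum kappa) !big_mkord //.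
Qed.

Theorem corollary1 (m Z gamma kappa : nat) :
  (1 <= Z)%N -> (2 <= gamma)%N -> (2 <= kappa)%N ->
  (gamma + kappa < gamma * kappa)%N ->
  ((2 * m ^ 2 + 4 * m + 3)%N%:R / ((3 * (m + 1) ^ 3 * Z)%N%:R : rat)
     <= Num.max (boundI gamma kappa) (boundII gamma kappa)) ->
  ((Z * (m + 1))%N%:R ^+ (gamma * kappa) *
     (if boundI gamma kappa > boundII gamma kappa then
        (1 - 2%:R / (Delta gamma kappa)%:R) ^+ ('C(gamma, 2) * 'C(kappa, 2))
      else
        (1 - (gamma * kappa - gamma - kappa + 1)%N%:R
               / (4 * (gamma * kappa - gamma - kappa))%N%:R) ^+ (gamma * kappa))
   : rat) <= (Ncount gamma kappa m Z)%:R.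
Proof.
move=> Z1 g2 k2 gk hyp.
have cnt := @count_main gamma kappa m Z Z1.
apply: le_trans (_ : (\prod_(c : ('I_gamma * 'I_kappa)%type) (m.+1 * Z - c.1 * c.2))%N%:R <= _); last by rewrite ler_nat.
rewrite natr_prod.
have -> : (Z * (m + 1))%N = (m.+1 * Z)%N by lia.
have -> : ((m.+1 * Z)%N%:R : rat) ^+ (gamma * kappa) = \prod_(c : ('I_gamma * 'I_kappa)%type) ((m.+1 * Z)%N%:R : rat).
  by rewrite prodr_const card_prod !card_ord.
set K := (gamma * kappa - gamma - kappa)%N.
have K0 : (0 < K)%N by rewrite /K; lia.
have eK : (K + 1 = (gamma - 1) * (kappa - 1))%N by rewrite /K; nia.
have bc (c : ('I_gamma * 'I_kappa)%type) : (c.1 * c.2 <= K + 1)%N.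
  rewrite eK; case: c => i j /=; have := ltn_ord i; have := ltn_ord j; nia.
set M := (m.+1 * Z)%N.
set pn := (2 * m ^ 2 + 4 * m + 3)%N.
set pd := (3 * (m + 1) ^ 3 * Z)%N.
have pd0 : (0 < pd)%N by rewrite /pd; nia.
have pn2 : (2 * (m + 1) ^ 2 <= pn)%N by rewrite /pn; nia.
case HI : (boundII gamma kappa < boundI gamma kappa).
- rewrite max_l in hyp; last exact: ltW.
  set D := Delta gamma kappa.
  have D3 : (3 <= D)%N by exact: D3_lem.
  have DK : (3 * (K + 1) <= 2 * D)%N by rewrite eK; exact: DK_lem.
  have DM : (4 * D <= 3 * M)%N.
    move: hyp; rewrite /boundI -/D.
    have eD : (D%:R - 1 : rat) = (D.-1)%:R by rewrite -{1}(prednK (ltnW (ltnW D3))) -natr1 addrK.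
    rewrite eD -!natrX => /cross => /(_ pd0) H.
    have Dp : (0 < D ^ D)%N by rewrite expn_gt0 (ltnW (ltnW D3)).
    have {}H := H Dp; rewrite -/pn -/pd in H.
    have [k Dk] : exists k, D = k.+1.
      exists D.-1; rewrite prednK; first reflexivity.
      by apply: leq_trans D3.
    have k0 : (0 < k)%N by move: D3; rewrite Dk ltnS => /ltnW.
    have B := @bern2 k k0.
    move: H; rewrite Dk /= expnS.
    set X := (k ^ k)%N; set Y := (k.+1 ^ k)%N => H.
    have X0 : (0 < X)%N by rewrite /X expn_gt0 k0.
    have H1 : (X * (2 * pn * k.+1) <= pn * (k.+1 * Y))%N.
      have E1 : (X * (2 * pn * k.+1) = pn * k.+1 * (2 * X))%N by ring.
      have E2 : (pn * (k.+1 * Y) = pn * k.+1 * Y)%N by ring.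
      rewrite E1 E2; exact: leq_mul.
    have H2 : (X * (2 * pn * D) <= X * pd)%N.
      rewrite Dk; exact: leq_trans H1 H.
    rewrite leq_pmul2l in H2; last exact: X0.
    rewrite -Dk.
    have H3 : ((m + 1) ^ 2 * (4 * D) <= (m + 1) ^ 2 * (3 * M))%N.
      have e1 : ((m + 1) ^ 2 * (4 * D) = 2 * (2 * (m + 1) ^ 2) * D)%N by ring.
      have e2 : ((m + 1) ^ 2 * (3 * M) = pd)%N by rewrite /pd /M -addn1; ring.
      rewrite e1 e2; apply: leq_trans H2; exact: leq_mul (leq_mul (leqnn 2) pn2) (leqnn D).
    rewrite leq_pmul2l in H3; first exact: H3.
    by rewrite expn_gt0 addn1.
  rewrite -(sum_cells gamma kappa) -prodrXr -big_split /=.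
  clearbody D M K pn pd.
  apply: ler_prod => c _; have hb := bc c; apply: cellI; [exact: D3 | lia | lia].
- have HI' : boundI gamma kappa <= boundII gamma kappa by rewrite leNgt HI.
  rewrite max_r in hyp; last exact: HI'.
  have KM : (4 * K <= M)%N.
    move: hyp; rewrite /boundII -natrM -/K => /cross => /(_ pd0) H.
    have h256 : (0 < 256 * K)%N by rewrite muln_gt0 K0.
    have {}H := H h256; rewrite -/pn -/pd in H.
    have H3 : (128 * ((m + 1) ^ 2 * (4 * K)) <= 81 * ((m + 1) ^ 2 * M))%N.
      have e1 : (128 * ((m + 1) ^ 2 * (4 * K)) = (2 * (m + 1) ^ 2) * (256 * K))%N by ring.
      have e2 : (81 * ((m + 1) ^ 2 * M) = 27 * pd)%N by rewrite /pd /M -addn1; ring.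
      rewrite e1 e2; apply: leq_trans H; exact: leq_mul pn2 (leqnn _).
    have H4 : ((m + 1) ^ 2 * (4 * K) <= (m + 1) ^ 2 * M)%N.
      move: H3; set A := ((m + 1) ^ 2 * (4 * K))%N; set B := ((m + 1) ^ 2 * M)%N; lia.
    rewrite leq_pmul2l in H4; first exact: H4.
    by rewrite expn_gt0 addn1.
  rewrite -/K.
  have -> : forall x : rat, x ^+ (gamma * kappa) = \prod_(c : ('I_gamma * 'I_kappa)%type) x.
    by move=> x; rewrite prodr_const card_prod !card_ord.
  rewrite -big_split /=.
  clearbody M K pn pd.
  apply: ler_prod => c _; apply: cellII; [exact: K0 | exact: KM | exact: bc].
Qed.
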